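(* Let $t$ be a positive integer. (1) If there exists a good vector with respect to $t$ of length $2t$, then for every positive integer $n$ with $(4t+1)\mid n$, $N_P(n,2t+1,4t+1)\le (t+1)n$. (2) For every positive integer $n$ with $(4t+2)\mid n$, $N_P(n,2t+1,4t+2)\le (t+1)n$.
   Context: Good vector: for a positive integer $t$, a vector $\mathbf v=(v_1,\dots,v_{2t})\in[t]^{2t}$ or $\mathbf v\in\{0,\dots,t\}^{2t+1}$ is good w.r.t. $t$ if every $j\in[t]=\{1,\dots,t\}$ appears exactly twice in $\mathbf v$ and whenever $v_i=v_{i'}=j\in[t]$ with $i<i'$ then $i'-i=j$. Fix a finite field $\mathbb{F}_q$. An $(n,N,k,m)$-PIR array code over $\mathbb{F}_q$ is an $\mathbb{F}_q$-linear map $\mathbf x\in\mathbb{F}_q^n\mapsto(\mathbf c_1,\dots,\mathbf c_m)$ with buckets $\mathbf c_\ell\in\mathbb{F}_q^{N_\ell}$, $N_\ell\ge1$ independent of $\mathbf x$, $\sum_\ell N_\ell=N$, such that for each $i\in[n]$ there is a partition of $[m]$ into $k$ sets $R_1,\dots,R_k$ such that for each $j$, $x_i$ is an $\mathbb{F}_q$-linear combination of values $f_\ell(\mathbf c_\ell)$, $\ell\in R_j$, for some linear functionals $f_\ell$ (independent of $\mathbf x$). $N_P(n,k,m)$ is the minimum $N$ for which such a code exists. *)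

(* Defs.v *)
From HB Require Import structures.
From mathcomp Require Import all_boot all_order all_algebra all_field.
From mathcomp Require Import boolp.
Set Implicit Arguments. Unset Strict Implicit. Unset Printing Implicit Defensive.
Import GRing.Theory.

Definition good_vector_2t (t : nat) (v : seq nat) : Prop :=
  [/\ size v = 2 * t,
      all (fun x => 0 < x <= t) v,
      (forall j, 0 < j <= t -> count_mem j v = 2) &
      (forall i i', i < i' -> i' < size v -> nth 0 v i = nth 0 v i' ->
         0 < nth 0 v i -> i' - i = nth 0 v i)].

Local Open Scope ring_scope.

(* An (n, N, k, m)-PIR array code over F: bucket sizes Ns l >= 1 summing to N,
   bucket l stores c_l = x *m enc l (an F-linear map of x in F^n); for every
   i there is a partition of the buckets into k classes (part : 'I_m -> 'I_k,
   class j = part^-1(j)) and linear functionals f_l (column vectors; the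
   coefficients of the linear combination are absorbed into f_l) such that
   for each class j, x_i = sum_{l in R_j} f_l(c_l) for all x. *)
Definition PIR_array_code (F : fieldType) (n N k m : nat)
    (Ns : 'I_m -> nat) (enc : forall l : 'I_m, 'M[F]_(n, Ns l)) : Prop :=
  [/\ (forall l, (0 < Ns l)%N),
      (\sum_(l < m) Ns l)%N = N &
      forall i : 'I_n, exists part : 'I_m -> 'I_k,
        exists f : forall l : 'I_m, 'cV[F]_(Ns l),
          forall (j : 'I_k) (x : 'rV[F]_n),
            x 0 i = \sum_(l < m | part l == j) (x *m enc l *m f l) 0 0].

Definition has_PIR_code (F : fieldType) (n k m N : nat) : Prop :=
  exists (Ns : 'I_m -> nat) (enc : forall l : 'I_m, 'M[F]_(n, Ns l)),
    @PIR_array_code F n N k m Ns enc.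

Lemma has_PIR_code_ex (F : fieldType) n k m :
  (exists N, has_PIR_code F n k m N) ->
  exists N, (fun N => `[< has_PIR_code F n k m N >]) N.
Proof. by case=> N H; exists N; apply/asboolP. Qed.

(* N_P(n,k,m): the minimum N for which an (n,N,k,m)-PIR array code over F
   exists (set to 0 if no such code exists; this case never arises in the
   statement since replication codes always exist for k <= m). *)
Definition N_P (F : fieldType) (n k m : nat) : nat :=
  match pselect (exists N, has_PIR_code F n k m N) with
  | left h => ex_minn (has_PIR_code_ex h)
  | right _ => 0%N
  end.

(* Main.v *)
Require Import Defs.
From mathcomp Require Import all_boot all_order all_algebra all_field.
From mathcomp Require Import zify.
From mathcomp Require Import boolp.
Set Implicit Arguments. Unset Strict Implicit. Unset Printing Implicit Defensive.
Import GRing.Theory.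
Local Open Scope ring_scope.

Definition Xv (F : fieldType) n (x : 'rV[F]_n) (p : nat) : F :=
  \sum_(i' < n) x 0 i' * ((i' == p :> nat)%:R).

Lemma XvE (F : fieldType) n (x : 'rV[F]_n) (i : 'I_n) : Xv x i = x 0 i.
Proof.
rewrite /Xv (bigD1 i) //= eqxx mulr1 big1 ?addr0 // => i' ne.
by rewrite (_ : (val i' == val i) = false) ?mulr0 //; apply/negbTE.
Qed.

Lemma mul_delta_col (F : fieldType) p (Y : 'M[F]_(1, p)) (c : 'I_p) :
  (Y *m delta_mx c (0 : 'I_1)) 0 0 = Y 0 c.
Proof.
rewrite mxE (bigD1 c) //= mxE !eqxx mulr1 big1 ?addr0 // => k nk.
by rewrite mxE (negbTE nk) mulr0.
Qed.

Definition idxn (M : nat) (p : 'I_M.+1) (r : nat) : nat := (p + M.+1 * r)%N.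

Definition encG (F : fieldType) (M q P n : nat) (A1 B1 : nat -> 'I_M.+1)
  (l : 'I_M.+1) : 'M[F]_(n, P.+1) :=
  \matrix_(i' < n, c < P.+1)
    (if (c %/ q == 0)%N then ((i' == idxn l (c %% q) :> nat)%:R)
     else ((i' == idxn (l - A1 (c %/ q).-1) (c %% q) :> nat)%:R +
           (i' == idxn (l - A1 (c %/ q).-1 + B1 (c %/ q).-1) (c %% q) :> nat)%:R)).

Lemma bucket_val (F : fieldType) (M q P n : nat) (A1 B1 : nat -> 'I_M.+1)
  (l : 'I_M.+1) (x : 'rV[F]_n) (b r : nat) (coef : F)
  (hb : (b * q + r < P.+1)%N) (hr : (r < q)%N) :
  (x *m encG F q P n A1 B1 l *m (coef *: delta_mx (inord (b * q + r) : 'I_P.+1) (0 : 'I_1))) 0 0 =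
  coef * (if (b == 0)%N then Xv x (idxn l r)
          else Xv x (idxn (l - A1 b.-1) r) + Xv x (idxn (l - A1 b.-1 + B1 b.-1) r)).
Proof.
have hq : (0 < q)%N by apply: leq_ltn_trans hr.
rewrite -scalemxAr mxE mul_delta_col mxE.
under eq_bigr => k _ do rewrite /encG mxE inordK //.
rewrite divnMDl // modnMDl (divn_small hr) (modn_small hr) addn0.
case: eqP => _; first by [].
rewrite /Xv -big_split /=; congr (_ * _); apply: eq_bigr => k _.
by rewrite mulrDr.
Qed.

Definition role (t : nat) := option (('I_t * bool) * bool).

Definition pos (t M : nat) (A1 A2 B1 B2 : nat -> 'I_M.+1) (rh : role t) : 'I_M.+1 :=
  match rh with
  | None => 0
  | Some ((j, s), k) =>
      if s then (if k then B2 j else A2 j) else (if k then B1 j else A1 j)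
  end.

Definition cls (t : nat) (rh : role t) : 'I_(2 * t).+1 :=
  match rh with
  | None => 0
  | Some ((j, s), _) => inord (1 + j + s * t)
  end.

Definition blk (t : nat) (rh : role t) : nat :=
  match rh with
  | None => 0
  | Some ((j, _), k) => if k then 0 else j.+1
  end.

Definition coefr (F : fieldType) (t : nat) (rh : role t) : F :=
  match rh with
  | Some (_, true) => -1
  | _ => 1
  end.

Lemma cls_surj t (J : 'I_(2 * t).+1) : exists rh : role t, cls rh = J.
Proof.
case: (posnP J) => [J0|Jp].
  by exists None; apply: val_inj; rewrite /= J0.
case: (ltnP J.-1 t) => hJ.
  exists (Some ((Ordinal hJ, false), false)); apply: val_inj => /=.
  rewrite inordK; lia.
have hJ' : (J.-1 - t < t)%N by have := ltn_ord J; lia.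
exists (Some ((Ordinal hJ', true), false)); apply: val_inj => /=.
rewrite inordK; have := ltn_ord J; lia.
Qed.

Lemma cls_val t (j : 'I_t) (s k : bool) :
  nat_of_ord (cls (Some ((j, s), k))) = (1 + j + s * t)%N.
Proof. by rewrite /= inordK //; have := ltn_ord j; case: s => /=; lia. Qed.

Lemma gen_code (F : fieldType) (t M q : nat) (A1 A2 B1 B2 : nat -> 'I_M.+1)
  (hq : (0 < q)%N)
  (h1 : forall j, (j < t)%N -> A2 j + B1 j = A1 j)
  (h2 : forall j, (j < t)%N -> A1 j + B2 j = A2 j)
  (hinj : injective (@pos t M A1 A2 B1 B2)) :
  has_PIR_code F (M.+1 * q) (2 * t).+1 M.+1 (t.+1 * (M.+1 * q)).
Proof.
set n := (M.+1 * q)%N.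
set P := ((t.+1 * q).-1)%N.
have hP : P.+1 = (t.+1 * q)%N by rewrite /P prednK // muln_gt0.
exists (fun _ => P.+1), (encG F q P n A1 B1); split.
- by [].
- by rewrite sum_nat_const card_ord hP /n mulnCA.
move=> i.
set a : 'I_M.+1 := inord (i %% M.+1).
set r := (i %/ M.+1)%N.
have hi : nat_of_ord i = idxn a r.
  by rewrite /idxn /a inordK ?ltn_pmod // mulnC addnC -divn_eq.
have hr : (r < q)%N by rewrite /r ltn_divLR // mulnC.
pose roleof (l : 'I_M.+1) := [pick rh : role t | pos A1 A2 B1 B2 rh == l - a].
exists (fun l => oapp (@cls t) 0 (roleof l)).
exists (fun l => oapp (fun rh => coefr F rh *:
          delta_mx (inord (blk rh * q + r) : 'I_P.+1) (0 : 'I_1)) 0 (roleof l)).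
move=> J x.
have Rs : forall l rh, roleof l = Some rh -> l = a + pos A1 A2 B1 B2 rh.
  move=> l rh; rewrite /roleof; case: pickP => // rh' /eqP e [<-].
  by rewrite e addrC subrK.
have Rp : forall rh, roleof (a + pos A1 A2 B1 B2 rh) = Some rh.
  move=> rh; rewrite /roleof; case: pickP => [rh' /eqP e | H].
    by congr Some; apply: hinj; rewrite e addrC addKr.
  by have := H rh; rewrite addrC addKr eqxx.
have blk_lt : forall rh : role t, (blk rh * q + r < P.+1)%N.
  move=> [[[j s] k]|] /=; rewrite hP; last by rewrite mul0n add0n; lia.
  case: k; first by rewrite mul0n add0n; lia.
  have := ltn_ord j; nia.
have Vs : forall rh : role t,
  (x *m encG F q P n A1 B1 (a + pos A1 A2 B1 B2 rh) *m
     oapp (fun rh => coefr F rh *: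
          delta_mx (inord (blk rh * q + r) : 'I_P.+1) (0 : 'I_1)) 0
        (roleof (a + pos A1 A2 B1 B2 rh))) 0 0 =
  coefr F rh * (if (blk rh == 0)%N then Xv x (idxn (a + pos A1 A2 B1 B2 rh) r)
          else Xv x (idxn (a + pos A1 A2 B1 B2 rh - A1 (blk rh).-1) r) +
               Xv x (idxn (a + pos A1 A2 B1 B2 rh - A1 (blk rh).-1 + B1 (blk rh).-1) r)).
  by move=> rh; rewrite Rp /= bucket_val.
have rest : forall l, roleof l = None ->
  (x *m encG F q P n A1 B1 l *m
     oapp (fun rh => coefr F rh *:
          delta_mx (inord (blk rh * q + r) : 'I_P.+1) (0 : 'I_1)) 0
        (roleof l)) 0 0 = 0.
  by move=> l ->; rewrite /= mulmx0 mxE.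
have [rh0 <-] := cls_surj J.
case: rh0 => [[[j s] k]|].
- have hj := ltn_ord j.
  pose r1 : role t := Some ((j, s), false).
  pose r2 : role t := Some ((j, s), true).
  have -> : cls (Some ((j, s), k)) = cls r1 by [].
  have n12 : a + pos A1 A2 B1 B2 r2 != a + pos A1 A2 B1 B2 r1.
    by apply/negP => /eqP /addrI /hinj.
  rewrite (bigD1 (a + pos A1 A2 B1 B2 r1)) ?Rp ?eqxx //=.
  rewrite (bigD1 (a + pos A1 A2 B1 B2 r2)) ?Rp ?n12 ?eqxx //=.
  rewrite big1 ?addr0; last first.
    move=> l /andP [/andP [hc hl1] hl2].
    case e: (roleof l) => [rh|]; last by rewrite /= mulmx0 mxE.
    move: hc; rewrite e /=.
    case: rh e => [[[j' s'] k']|] e hc; last first.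
      move: hc => /eqP /(congr1 val); rewrite /= inordK; last by case: (s); lia.
      by [].
    have hj' := ltn_ord j'.
    move: hc => /eqP /(congr1 val); rewrite /= !inordK; last (by case: (s); lia); last (by case: (s'); lia).
    move=> hc.
    have ejj : j' = j by apply: val_inj; move: hc; case: (s); case: (s') => /=; lia.
    have ess : s' = s by move: hc; case: (s); case: (s') => /=; lia.
    subst j' s'.
    move/Rs: e; case: k' => El; [move: hl2 | move: hl1]; by rewrite El /= eqxx.
  have hb1 := blk_lt r1; have hb2 := blk_lt r2; simpl in hb1, hb2.
  rewrite !bucket_val //=.
  case: s {r1 r2 n12} => /=.
  + have e1 : a + A2 j - A1 j = a + B2 j.
      by rewrite -(h2 j hj) addrA addrAC addrK.
    have e2 : a + A2 j - A1 j + B1 j = a.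
      by rewrite -(h1 j hj) opprD addrA subrK addrK.
    by rewrite e2 e1 mul1r mulN1r addrAC subrr add0r -hi XvE.
  + by rewrite addrK mul1r mulN1r addrK -hi XvE.
- rewrite (bigD1 (a + pos A1 A2 B1 B2 (None : role t))) ?Rp ?eqxx //=.
  rewrite big1 ?addr0; last first.
    move=> l /andP [hc hl].
    case e: (roleof l) => [rh|]; last by rewrite /= mulmx0 mxE.
    move: hc; rewrite e.
    case: rh e => [[[j' s'] k']|] e hc.
      have hj' := ltn_ord j'.
      move: hc => /eqP /(congr1 val); rewrite /= inordK //; case: (s'); lia.
    by move/Rs: e => El; rewrite El /= addr0 eqxx in hl.
  have hb0 := blk_lt None; simpl in hb0.
  by rewrite bucket_val //= mul1r -hi XvE.
Qed.

Lemma inst2 (F : fieldType) t q (ht : (0 < t)%N) (hq : (0 < q)%N) :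
  has_PIR_code F ((4*t+1).+1 * q) (2*t).+1 (4*t+1).+1 (t.+1 * ((4*t+1).+1*q)).
Proof.
pose A1 j : 'I_(4*t+1).+1 := inord (2*j+3).
pose A2 j : 'I_(4*t+1).+1 := inord (4*t+1-2*j).
pose B1 j : 'I_(4*t+1).+1 := inord (4*j+4).
pose B2 j : 'I_(4*t+1).+1 := inord (4*t-2-4*j).
have vA1 j : (j < t)%N -> nat_of_ord (A1 j) = (2*j+3)%N by move=> hj; rewrite inordK; lia.
have vA2 j : (j < t)%N -> nat_of_ord (A2 j) = (4*t+1-2*j)%N by move=> hj; rewrite inordK; lia.
have vB1 j : (j < t)%N -> nat_of_ord (B1 j) = (4*j+4)%N by move=> hj; rewrite inordK; lia.
have vB2 j : (j < t)%N -> nat_of_ord (B2 j) = (4*t-2-4*j)%N by move=> hj; rewrite inordK; lia.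
apply: (@gen_code F t (4*t+1) q A1 A2 B1 B2 hq).
- move=> j hj; apply: val_inj => /=. rewrite vA2 // vB1 // vA1 //.
  rewrite (_ : (4 * t + 1 - 2 * j + (4 * j + 4) = 2 * j + 3 + (4 * t + 1).+1)%N); last lia.
  by rewrite modnDr modn_small //; lia.
- move=> j hj; apply: val_inj => /=. rewrite vA1 // vB2 // vA2 //.
  by rewrite modn_small //; lia.
move=> [[[j s] k]|] [[[j' s'] k']|]; try (have hj := ltn_ord j); try (have hj' := ltn_ord j');
  try (case: (s)); try (case: (k)); try (case: (s')); try (case: (k'));
  move=> /= /(congr1 val) /=;
  rewrite ?vA1 ?vA2 ?vB1 ?vB2 //;
  first [ by [] | (by lia)
        | (move=> h; have ejj : j = j'; [by apply: ord_inj; lia | by subst j']) ].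
Qed.

Local Close Scope ring_scope.

Lemma skolem_pos t v : good_vector_2t t v -> forall j, j < t ->
  [/\ index j.+1 v + j.+1 < 2 * t, nth 0 v (index j.+1 v) = j.+1 &
      nth 0 v (index j.+1 v + j.+1) = j.+1].
Proof.
case=> hs hall hcnt hdist j hj.
have c2 := hcnt j.+1 (ltac:(by rewrite ltn0Sn hj)).
have inv : j.+1 \in v by rewrite -has_pred1 has_count c2.
set p := index j.+1 v.
have pl : p < size v by rewrite index_mem.
have np : nth 0 v p = j.+1 by rewrite nth_index.
have hdrop : drop p v = j.+1 :: drop p.+1 v by rewrite (drop_nth 0 pl) np.
have ctake : count_mem j.+1 (take p v) = 0.
  by apply/count_memPn; rewrite in_take // ltnn.
have c1 : count_mem j.+1 (drop p.+1 v) = 1.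
  by move: c2; rewrite -{1}(cat_take_drop p v) count_cat ctake hdrop /= eqxx add0n add1n => -[].
have in2 : j.+1 \in drop p.+1 v by rewrite -has_pred1 has_count c1.
set i0 := index j.+1 (drop p.+1 v).
have i0l : i0 < size (drop p.+1 v) by rewrite index_mem.
have ni : nth 0 v (p.+1 + i0) = j.+1 by rewrite -nth_drop nth_index.
rewrite size_drop in i0l.
have e := hdist p (p.+1 + i0) (ltac:(lia)) (ltac:(lia)) (etrans np (esym ni)) (ltac:(by rewrite np)).
rewrite np in e.
have -> : p + j.+1 = p.+1 + i0 by lia.
split => //; lia.
Qed.

Local Open Scope ring_scope.
Lemma inst1 (F : fieldType) t q v (ht : (0 < t)%N) (hq : (0 < q)%N)
  (hv : good_vector_2t t v) :
  has_PIR_code F ((4*t).+1 * q) (2*t).+1 (4*t).+1 (t.+1 * ((4*t).+1*q)).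
Proof.
pose p j := index j.+1 v.
have sk := skolem_pos hv.
have F1 j j' : (j < t)%N -> (j' < t)%N -> (p j + j.+1 = p j' + j'.+1)%N -> j = j'.
  move=> hj hj' e; have [_ _ n1] := sk j hj; have [_ _ n2] := sk j' hj'.
  by move: n1; rewrite -/(p j) e n2 => -[].
have F2 j j' : (j < t)%N -> (j' < t)%N -> p j = p j' -> j = j'.
  move=> hj hj' e; have [_ n1 _] := sk j hj; have [_ n2 _] := sk j' hj'.
  by move: n1; rewrite -/(p j) e n2 => -[].
have F3 j j' : (j < t)%N -> (j' < t)%N -> (p j + j.+1 = p j')%N -> False.
  move=> hj hj' e; have [_ _ n1] := sk j hj; have [_ n2 _] := sk j' hj'.
  move: n1; rewrite -/(p j) e n2 => -[] ejj; move: e; rewrite ejj; lia.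
have Pl j : (j < t)%N -> (p j + j.+1 < 2 * t)%N by move=> hj; have [] := sk j hj.
pose A1 j : 'I_(4*t).+1 := inord (t + 1 + p j + j.+1).
pose A2 j : 'I_(4*t).+1 := inord (t + 1 + p j).
pose B1 j : 'I_(4*t).+1 := inord (j.+1).
pose B2 j : 'I_(4*t).+1 := inord (4*t - j).
have vA1 j : (j < t)%N -> nat_of_ord (A1 j) = (t + 1 + p j + j.+1)%N.
  by move=> hj; have h := Pl j hj; rewrite inordK; lia.
have vA2 j : (j < t)%N -> nat_of_ord (A2 j) = (t + 1 + p j)%N.
  by move=> hj; have h := Pl j hj; rewrite inordK; lia.
have vB1 j : (j < t)%N -> nat_of_ord (B1 j) = (j.+1)%N by move=> hj; rewrite inordK; lia.
have vB2 j : (j < t)%N -> nat_of_ord (B2 j) = (4*t - j)%N by move=> hj; rewrite inordK; lia.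
apply: (@gen_code F t (4*t) q A1 A2 B1 B2 hq).
- move=> j hj; apply: val_inj => /=. rewrite vA2 // vB1 // vA1 //.
  by have h := Pl j hj; rewrite modn_small //; lia.
- move=> j hj; apply: val_inj => /=. rewrite vA1 // vB2 // vA2 //.
  rewrite (_ : (t + 1 + p j + j.+1 + (4 * t - j) = t + 1 + p j + (4 * t).+1)%N); last lia.
  by have h := Pl j hj; rewrite modnDr modn_small //; lia.
move=> [[[j s] k]|] [[[j' s'] k']|]; try (have hj := ltn_ord j); try (have hj' := ltn_ord j');
  try (have f1 := F1 j j' hj hj'); try (have f2 := F2 j j' hj hj');
  try (have f3 := F3 j j' hj hj'); try (have f4 := F3 j' j hj' hj);
  try (have g1 := Pl j hj); try (have g2 := Pl j' hj');
  try (case: (s)); try (case: (k)); try (case: (s')); try (case: (k'));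
  move=> /= /(congr1 val) /=;
  rewrite ?vA1 ?vA2 ?vB1 ?vB2 //;
  first [ by [] | (by lia)
        | (move=> h; have ejj : j = j'; [by apply: ord_inj; lia | by subst j']) ].
Qed.

Local Close Scope ring_scope.

Lemma NP_le (F : fieldType) n k m N :
  has_PIR_code F n k m N -> (N_P F n k m <= N)%N.
Proof.
move=> H; rewrite /N_P; case: pselect => [h|h]; last by exfalso; apply: h; exists N.
by case: ex_minnP => m' _; apply; apply/asboolP.
Qed.

Theorem corollary4p3 (F : finFieldType) (t : nat) (ht : (0 < t)%N) :
  ((exists v : seq nat, good_vector_2t t v) ->
     forall n : nat, (0 < n)%N -> (4 * t + 1 %| n)%N ->
       (N_P F n (2 * t + 1) (4 * t + 1) <= (t + 1) * n)%N)
  /\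
  (forall n : nat, (0 < n)%N -> (4 * t + 2 %| n)%N ->
       (N_P F n (2 * t + 1) (4 * t + 2) <= (t + 1) * n)%N).
Proof.
split.
- move=> [v hv] n hn hd.
  set q := (n %/ (4 * t + 1))%N.
  have hq : (0 < q)%N by rewrite /q divn_gt0; [apply: dvdn_leq | lia].
  have e : n = ((4*t).+1 * q)%N by rewrite /q -addn1 mulnC divnK.
  rewrite e !addn1; apply: NP_le; exact: (@inst1 F t q v ht hq hv).
- move=> n hn hd.
  set q := (n %/ (4 * t + 2))%N.
  have hq : (0 < q)%N by rewrite /q divn_gt0; [apply: dvdn_leq | lia].
  have e : n = ((4*t+1).+1 * q)%N.
    by rewrite /q (_ : (4*t+1).+1 = 4*t+2)%N; [rewrite mulnC divnK | lia].
  rewrite e (_ : (4 * t + 2 = (4*t+1).+1)%N); last lia.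
  rewrite (_ : (2 * t + 1 = (2*t).+1)%N) ?addn1 //.
  by apply: NP_le; have := @inst2 F t q ht hq; rewrite addn1.
Qed.
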